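(* Every transformation $q\mapsto(aq+b)(cq+d)^{-1}$ induced by an invertible matrix $\begin{pmatrix}a&b\\c&d\end{pmatrix}$ with entries in the Hurwitz integers which satisfies the (BG) conditions belongs to the Hurwitz quaternionic modular group $PSL(2,\mathfrak H)$.
   Context: The Hurwitz integers are $\{a+b\mathbf i+c\mathbf j+d\mathbf k: a,b,c,d\in\mathbb Z\text{ or }a,b,c,d\in\mathbb Z+\tfrac12\}$. A quaternionic matrix $A$ satisfies the (BG) conditions if $\bar A^tKA=K$, $K=\begin{pmatrix}0&1\\1&0\end{pmatrix}$, equivalently $\Re(a\bar c)=0$, $\Re(b\bar d)=0$, $\bar bc+\bar da=1$. $PSL(2,\mathfrak H)$ is the group generated by $T(q)=q^{-1}$, the translations $q\mapsto q+\omega$ with $\omega\in\{b\mathbf i+c\mathbf j+d\mathbf k:b,c,d\in\mathbb Z\}$, and the maps $q\mapsto uqu^{-1}$ where $u$ ranges over the 24 Hurwitz units $\pm1,\pm\mathbf i,\pm\mathbf j,\pm\mathbf k,\frac12(\pm1\pm\mathbf i\pm\mathbf j\pm\mathbf k)$. *)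

(* Defs.v *)
From HB Require Import structures.
From mathcomp Require Import all_boot all_order all_algebra.
Set Implicit Arguments. Unset Strict Implicit. Unset Printing Implicit Defensive.
Import Order.TTheory GRing.Theory Num.Theory.
Local Open Scope ring_scope.

Section Quat.
Variable R : realFieldType.

Record quat := Quat { q0 : R; q1 : R; q2 : R; q3 : R }.

Definition qadd (x y : quat) := Quat (q0 x + q0 y) (q1 x + q1 y) (q2 x + q2 y) (q3 x + q3 y).
Definition qmul (x y : quat) :=
  Quat (q0 x * q0 y - q1 x * q1 y - q2 x * q2 y - q3 x * q3 y)
       (q0 x * q1 y + q1 x * q0 y + q2 x * q3 y - q3 x * q2 y)
       (q0 x * q2 y - q1 x * q3 y + q2 x * q0 y + q3 x * q1 y)
       (q0 x * q3 y + q1 x * q2 y - q2 x * q1 y + q3 x * q0 y).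
Definition qconj (x : quat) := Quat (q0 x) (- q1 x) (- q2 x) (- q3 x).
Definition qnorm2 (x : quat) := q0 x ^+ 2 + q1 x ^+ 2 + q2 x ^+ 2 + q3 x ^+ 2.
Definition qscale (r : R) (x : quat) := Quat (r * q0 x) (r * q1 x) (r * q2 x) (r * q3 x).
Definition qinv (x : quat) := qscale (qnorm2 x)^-1 (qconj x).
Definition qzero := Quat 0 0 0 0.
Definition qone := Quat 1 0 0 0.
Definition qRe (x : quat) := q0 x.

Definition hurwitz (x : quat) : Prop :=
  exists a b c d : int,
    (q0 x = a%:~R /\ q1 x = b%:~R /\ q2 x = c%:~R /\ q3 x = d%:~R) \/
    (q0 x = a%:~R + 2^-1 /\ q1 x = b%:~R + 2^-1 /\ q2 x = c%:~R + 2^-1 /\ q3 x = d%:~R + 2^-1).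

Definition qmx_invertible (a b c d : quat) : Prop :=
  exists a' b' c' d' : quat,
    qadd (qmul a a') (qmul b c') = qone /\ qadd (qmul a b') (qmul b d') = qzero /\
    qadd (qmul c a') (qmul d c') = qzero /\ qadd (qmul c b') (qmul d d') = qone /\
    qadd (qmul a' a) (qmul b' c) = qone /\ qadd (qmul a' b) (qmul b' d) = qzero /\
    qadd (qmul c' a) (qmul d' c) = qzero /\ qadd (qmul c' b) (qmul d' d) = qone.

Definition BG (a b c d : quat) : Prop :=
  [/\ qRe (qmul a (qconj c)) = 0, qRe (qmul b (qconj d)) = 0 &
      qadd (qmul (qconj b) c) (qmul (qconj d) a) = qone].

(* Points of H u {oo}: None is the point at infinity *)
Definition P1 := option quat.

Definition mobius (a b c d : quat) (p : P1) : P1 :=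
  match p with
  | Some q => let den := qadd (qmul c q) d in
              if qnorm2 den == 0 then None else Some (qmul (qadd (qmul a q) b) (qinv den))
  | None => if qnorm2 c == 0 then None else Some (qmul a (qinv c))
  end.

Definition Tinv (p : P1) : P1 :=
  match p with
  | Some q => if qnorm2 q == 0 then None else Some (qinv q)
  | None => Some qzero
  end.

Definition transl (w : quat) (p : P1) : P1 :=
  match p with Some q => Some (qadd q w) | None => None end.
Definition pure_int_quat (w : quat) : Prop :=
  exists b c d : int, w = Quat 0 b%:~R c%:~R d%:~R.

Definition pm1 (x : R) := x = 1 \/ x = -1.
Definition pmhalf (x : R) := x = 2^-1 \/ x = - 2^-1.
Definition hurwitz_unit (u : quat) : Prop :=
     (pm1 (q0 u) /\ q1 u = 0 /\ q2 u = 0 /\ q3 u = 0)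
  \/ (pm1 (q1 u) /\ q0 u = 0 /\ q2 u = 0 /\ q3 u = 0)
  \/ (pm1 (q2 u) /\ q0 u = 0 /\ q1 u = 0 /\ q3 u = 0)
  \/ (pm1 (q3 u) /\ q0 u = 0 /\ q1 u = 0 /\ q2 u = 0)
  \/ (pmhalf (q0 u) /\ pmhalf (q1 u) /\ pmhalf (q2 u) /\ pmhalf (q3 u)).

Definition uconj (u : quat) (p : P1) : P1 :=
  match p with Some q => Some (qmul (qmul u q) (qinv u)) | None => None end.

Definition PSL2H_generator (f : P1 -> P1) : Prop :=
  f = Tinv \/ (exists w, pure_int_quat w /\ f = transl w)
          \/ (exists u, hurwitz_unit u /\ f = uconj u).

Definition in_PSL2H (f : P1 -> P1) : Prop :=
  forall S : (P1 -> P1) -> Prop,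
    S id ->
    (forall g, PSL2H_generator g -> S g) ->
    (forall g h, S g -> S h -> S (g \o h)) ->
    (forall g h, S g -> g \o h =1 id -> h \o g =1 id -> S h) ->
    S f.

End Quat.

(* Main.v *)
Require Import Defs.
From mathcomp Require Import all_boot all_order all_algebra.
From mathcomp Require Import ring lra zify.
From Stdlib Require Import FunctionalExtensionality.
Import Order.TTheory GRing.Theory Num.Theory.
Local Open Scope ring_scope.

Section H.
Variable R : realFieldType.
Local Notation Q := (quat R).

Definition qopp (x : Q) := qscale (-1) x.
Definition dot (x y : Q) := q0 x * q0 y + q1 x * q1 y + q2 x * q2 y + q3 x * q3 y.

Ltac qd := repeat match goal with x : quat R |- _ => destruct x end;
  rewrite /qopp /qmul /qadd /qconj /qscale /qinv /qnorm2 /qone /qzero /qRe /dot /=.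

Lemma t1 (a b c d : int) : a*a + b*b + c*c + d*d = 1 ->
  ((a = 1 \/ a = -1) /\ b = 0 /\ c = 0 /\ d = 0) \/
      ((b = 1 \/ b = -1) /\ a = 0 /\ c = 0 /\ d = 0) \/
      ((c = 1 \/ c = -1) /\ a = 0 /\ b = 0 /\ d = 0) \/
      ((d = 1 \/ d = -1) /\ a = 0 /\ b = 0 /\ c = 0).
Proof.
move=> h.
have ha : a = -1 \/ a = 0 \/ a = 1 by nia.
have hb : b = -1 \/ b = 0 \/ b = 1 by nia.
have hc : c = -1 \/ c = 0 \/ c = 1 by nia.
have hd : d = -1 \/ d = 0 \/ d = 1 by nia.
destruct ha as [ha|[ha|ha]]; destruct hb as [hb|[hb|hb]];
  destruct hc as [hc|[hc|hc]]; destruct hd as [hd|[hd|hd]]; subst a b c d; lia.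
Qed.

Lemma t2 (a : int) : (2*a+1)*(2*a+1) = 1 -> a = 0 \/ a = -1.
Proof. nia. Qed.

Lemma t3 (n : int) : exists m, n = 2 * m \/ n = 2 * m+1.
Proof. exists (n %/ 2)%Z. have := divz_eq n 2. have := modz_ge0 n (isT : (2:int) != 0).
have := ltz_pmod n (isT : (0 < 2 :> int)). lia. Qed.

Lemma t4 (N t : int) : 0 < N -> exists m, 4*((N * m + t)*(N * m+t)) <= N*N.
Proof. move=> hN.
have e := divz_eq t N. have h0 := modz_ge0 t (lt0r_neq0 hN).
have h1 := ltz_pmod t hN.
set q := (t %/ N)%Z in e *. set r := (t %% N)%Z in e h0 h1 *.
have [hr|hr] := lerP (2*r) N.
- exists (-q). nia.
- exists (-q-1). nia.
Qed.


Lemma qmulA (x y z : Q) : qmul x (qmul y z) = qmul (qmul x y) z.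
Proof. qd; f_equal; ring. Qed.
Lemma qmulDl (x y z : Q) : qmul (qadd x y) z = qadd (qmul x z) (qmul y z).
Proof. qd; f_equal; ring. Qed.
Lemma qmulDr (x y z : Q) : qmul z (qadd x y) = qadd (qmul z x) (qmul z y).
Proof. qd; f_equal; ring. Qed.
Lemma qaddC (x y : Q) : qadd x y = qadd y x.
Proof. qd; f_equal; ring. Qed.
Lemma qconj_mul (x y : Q) : qconj (qmul x y) = qmul (qconj y) (qconj x).
Proof. qd; f_equal; ring. Qed.
Lemma qnorm2_mul (x y : Q) : qnorm2 (qmul x y) = qnorm2 x * qnorm2 y.
Proof. qd; ring. Qed.
Lemma qnorm2_conj (x : Q) : qnorm2 (qconj x) = qnorm2 x.
Proof. qd; ring. Qed.
Lemma qnorm2_ge0 (x : Q) : 0 <= qnorm2 x.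
Proof. qd; nra. Qed.
Lemma qnorm2_eq0 (x : Q) : qnorm2 x = 0 -> x = qzero R.
Proof. qd => h; f_equal; nra. Qed.
Lemma qnorm2_one : qnorm2 (qone R) = 1.
Proof. qd; ring. Qed.
Lemma qnorm2_zero : qnorm2 (qzero R) = 0.
Proof. qd; ring. Qed.
Lemma qmulr1 (x : Q) : qmul x (qone R) = x.
Proof. qd; f_equal; ring. Qed.
Lemma qmul1r (x : Q) : qmul (qone R) x = x.
Proof. qd; f_equal; ring. Qed.
Lemma qmulr0 (x : Q) : qmul x (qzero R) = qzero R.
Proof. qd; f_equal; ring. Qed.
Lemma qmul0r (x : Q) : qmul (qzero R) x = qzero R.
Proof. qd; f_equal; ring. Qed.
Lemma qadd0l (x : Q) : qadd (qzero R) x = x.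
Proof. qd; f_equal; ring. Qed.
Lemma qaddr0 (x : Q) : qadd x (qzero R) = x.
Proof. qd; f_equal; ring. Qed.
Lemma qscale1 (x : Q) : qscale 1 x = x.
Proof. qd; f_equal; ring. Qed.
Lemma qconj_one : qconj (qone R) = qone R.
Proof. qd; f_equal; ring. Qed.
Lemma qinv_mul (x y : Q) : qinv (qmul x y) = qmul (qinv y) (qinv x).
Proof.
rewrite /qinv qnorm2_mul invfM qconj_mul.
move: (qnorm2 x)^-1 (qnorm2 y)^-1 => u v. qd; f_equal; ring.
Qed.
Lemma qmulV (x : Q) : qnorm2 x != 0 -> qmul x (qinv x) = qone R.
Proof.
move=> h; have: qnorm2 x * (qnorm2 x)^-1 = 1 by rewrite mulfV.
rewrite /qinv; move: (qnorm2 x)^-1 h => u. qd => h1 h2; f_equal; rewrite -?h2; ring.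
Qed.
Lemma qVmul (x : Q) : qnorm2 x != 0 -> qmul (qinv x) x = qone R.
Proof.
move=> h; have: qnorm2 x * (qnorm2 x)^-1 = 1 by rewrite mulfV.
rewrite /qinv; move: (qnorm2 x)^-1 h => u. qd => h1 h2; f_equal; rewrite -?h2; ring.
Qed.

Lemma den_id (c d w q s : Q) : qmul s (qadd q (qopp w)) = qone R ->
  qadd (qmul c q) d = qmul (qadd (qmul (qadd (qmul c w) d) s) c) (qadd q (qopp w)).
Proof.
move=> h; rewrite qmulDl -qmulA h qmulr1. qd; f_equal; ring.
Qed.

Lemma r0_eq (q w : Q) : qnorm2 (qadd q (qopp w)) = 0 -> q = w.
Proof. move/qnorm2_eq0; qd; case=> h0 h1 h2 h3; f_equal; lra. Qed.

Lemma mobius_step (a b c d w : Q) :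
  mobius a b c d = (mobius (qadd (qmul a w) b) a (qadd (qmul c w) d) c \o @Tinv R)
                     \o transl (qopp w).
Proof.
apply: functional_extensionality => -[q|] /=; last first.
  by rewrite !qmulr0 !qadd0l.
symmetry; case: ifP => [/eqP hr|/negbT hr'] /=.
  by rewrite (r0_eq _ _ hr).
symmetry.
have hs := qVmul _ hr'.
rewrite (den_id c d w q _ hs) (den_id a b w q _ hs) qnorm2_mul mulf_eq0 (negbTE hr') orbF.
case: eqP => // _.
by rewrite qinv_mul qmulA -(qmulA _ (qadd q (qopp w))) (qmulV _ hr') qmulr1.
Qed.

Definition hq (n0 n1 n2 n3 : int) : Q :=
  Quat (n0%:~R / 2) (n0%:~R / 2 + n1%:~R) (n0%:~R / 2 + n2%:~R) (n0%:~R / 2 + n3%:~R).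
Definition hw (x : Q) := exists n0 n1 n2 n3, x = hq n0 n1 n2 n3.

Lemma two_neq0 : (2 : R) != 0. Proof. by rewrite pnatr_eq0. Qed.

Ltac cast := rewrite /= ?(rmorphD, rmorphM, rmorphN, rmorphB, rmorph1, rmorph0) /=.

Lemma hw_mul (x y : Q) : hw x -> hw y -> hw (qmul x y).
Proof.
move=> [n0 [n1 [n2 [n3 ->]]]] [m0 [m1 [m2 [m3 ->]]]].
exists ((-1) * n0 * m0 + (-1) * n0 * m1 + (-1) * n0 * m2 + (-1) * n0 * m3 + (-1) * n1 * m0 + (-2) * n1 * m1 + (-1) * n2 * m0 + (-2) * n2 * m2 + (-1) * n3 * m0 + (-2) * n3 * m3),
     ((1) * n0 * m0 + (1) * n0 * m1 + (1) * n0 * m3 + (1) * n1 * m0 + (1) * n1 * m1 + (1) * n2 * m0 + (1) * n2 * m2 + (1) * n2 * m3 + (-1) * n3 * m2 + (1) * n3 * m3),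
     ((1) * n0 * m0 + (1) * n0 * m1 + (1) * n0 * m2 + (1) * n1 * m1 + (-1) * n1 * m3 + (1) * n2 * m0 + (1) * n2 * m2 + (1) * n3 * m0 + (1) * n3 * m1 + (1) * n3 * m3),
     ((1) * n0 * m0 + (1) * n0 * m2 + (1) * n0 * m3 + (1) * n1 * m0 + (1) * n1 * m1 + (1) * n1 * m2 + (-1) * n2 * m1 + (1) * n2 * m2 + (1) * n3 * m0 + (1) * n3 * m3).
rewrite /hq /qmul; have h2 := two_neq0. cast. f_equal; field; done.
Qed.

Lemma hw_add (x y : Q) : hw x -> hw y -> hw (qadd x y).
Proof.
move=> [n0 [n1 [n2 [n3 ->]]]] [m0 [m1 [m2 [m3 ->]]]].
exists (n0 + m0), (n1 + m1), (n2 + m2), (n3 + m3).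
rewrite /hq /qadd; have h2 := two_neq0. cast. f_equal; field; done.
Qed.

Lemma hw_conj (x : Q) : hw x -> hw (qconj x).
Proof.
move=> [n0 [n1 [n2 [n3 ->]]]].
exists n0, (- n0 - n1), (- n0 - n2), (- n0 - n3).
rewrite /hq /qconj; have h2 := two_neq0. cast. f_equal; field; done.
Qed.

Lemma hw_pint (w1 w2 w3 : int) : hw (Quat 0 w1%:~R w2%:~R w3%:~R).
Proof.
exists 0, w1, w2, w3. rewrite /hq; cast. f_equal; rewrite ?mul0r ?add0r //.
Qed.

Lemma hurwitz_hw (x : Q) : hurwitz x -> hw x.
Proof.
move=> [A [B [C [D [[e0 [e1 [e2 e3]]]|[e0 [e1 [e2 e3]]]]]]]].
- exists (2 * A), (B - A), (C - A), (D - A).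
  destruct x; simpl in *; subst. rewrite /hq; have h2 := two_neq0. cast. f_equal; field; done.
- exists (2 * A + 1), (B - A), (C - A), (D - A).
  destruct x; simpl in *; subst. rewrite /hq; have h2 := two_neq0. cast. f_equal; field; done.
Qed.

Lemma hq_norm n0 n1 n2 n3 : qnorm2 (hq n0 n1 n2 n3) =
  (n0 * n0 + n0 * (n1 + n2 + n3) + n1 * n1 + n2 * n2 + n3 * n3)%:~R.
Proof. rewrite /hq /qnorm2; have h2 := two_neq0. cast. field; done. Qed.

Lemma hw_norm (x : Q) : hw x -> exists N : int, qnorm2 x = N%:~R.
Proof. move=> [n0 [n1 [n2 [n3 ->]]]]; eexists; exact: hq_norm. Qed.

Lemma hw_pure (x : Q) : hw x -> q0 x = 0 -> pure_int_quat x.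
Proof.
move=> [n0 [n1 [n2 [n3 ->]]]] /= h.
have hn : n0 = 0.
  apply/eqP; rewrite -(intr_eq0 R); apply/eqP.
  by move/eqP: h; rewrite mulf_eq0 invr_eq0 (negbTE two_neq0) orbF => /eqP.
exists n1, n2, n3. rewrite /hq hn; cast. by rewrite mul0r !add0r.
Qed.

Lemma pm1_int (a : int) : a = 1 \/ a = -1 -> pm1 (a%:~R : R).
Proof. by case=> ->; [left|right]; cast. Qed.

Lemma z_int (a : int) : a = 0 -> (a%:~R : R) = 0.
Proof. by move=> ->. Qed.

Lemma unit_int (a b c d : int) : a * a + b * b + c * c + d * d = 1 ->
  hurwitz_unit (Quat (a%:~R : R) b%:~R c%:~R d%:~R).
Proof.
move/t1; rewrite /hurwitz_unit /=.
case=> [[h [hb [hc hd]]]|[[h [hb [hc hd]]]|[[h [hb [hc hd]]]|[h [hb [hc hd]]]]]].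
- by left; split; [exact: pm1_int|rewrite !z_int].
- by right; left; split; [exact: pm1_int|rewrite !z_int].
- by right; right; left; split; [exact: pm1_int|rewrite !z_int].
- by right; right; right; left; split; [exact: pm1_int|rewrite !z_int].
Qed.

Lemma half_int (a : int) : a = 0 \/ a = -1 -> pmhalf (a%:~R + 2^-1 : R).
Proof.
case=> ->; [left|right]; cast; rewrite ?add0r //.
have h2 := two_neq0. field; done.
Qed.

Lemma odd_sq (a : int) : 1 <= (2*a+1)*(2*a+1).
Proof. have [h|h] := lerP 0 a; nia. Qed.

Lemma unit_half (a b c d : int) :
  (2*a+1)*(2*a+1) + (2*b+1)*(2*b+1) + (2*c+1)*(2*c+1) + (2*d+1)*(2*d+1) = 4 ->
  hurwitz_unit (Quat (a%:~R + 2^-1 : R) (b%:~R + 2^-1) (c%:~R + 2^-1) (d%:~R + 2^-1)).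
Proof.
move=> h; right; right; right; right; rewrite /=.
have ha := odd_sq a; have hb := odd_sq b; have hc := odd_sq c; have hd := odd_sq d.
split; [|split; [|split]]; apply: half_int; apply: t2; lia.
Qed.

Lemma hw_unit (x : Q) : hw x -> qnorm2 x = 1 -> hurwitz_unit x.
Proof.
move=> [n0 [n1 [n2 [n3 ->]]]]; rewrite hq_norm => h1.
have : ((n0 * n0 + n0 * (n1 + n2 + n3) + n1 * n1 + n2 * n2 + n3 * n3)%:~R : R) == (1:int)%:~R by rewrite h1.
rewrite eqr_int => /eqP hN.
have [m [hm|hm]] := t3 n0.
- have -> : hq n0 n1 n2 n3 = Quat m%:~R (m + n1)%:~R (m + n2)%:~R (m + n3)%:~R.
    rewrite /hq hm; have h2 := two_neq0. cast. f_equal; field; done.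
  apply: unit_int. rewrite -hN hm. ring.
- have -> : hq n0 n1 n2 n3 = Quat (m%:~R + 2^-1) ((m + n1)%:~R + 2^-1) ((m + n2)%:~R + 2^-1) ((m + n3)%:~R + 2^-1).
    rewrite /hq hm; have h2 := two_neq0. cast. f_equal; field; done.
  apply: unit_half.
  transitivity (4 * (n0 * n0 + n0 * (n1 + n2 + n3) + n1 * n1 + n2 * n2 + n3 * n3)); last by rewrite hN.
  rewrite hm; ring.
Qed.

Definition inv4 (a b c d : Q) := dot a c = 0 /\ dot b d = 0 /\
  qadd (qmul (qconj b) c) (qmul (qconj d) a) = qone R /\ dot c d = 0.

Lemma qscale0 (x : Q) : qscale 0 x = qzero R.
Proof. qd; f_equal; ring. Qed.

Lemma inv4_step (a b c d w : Q) : q0 w = 0 -> inv4 a b c d ->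
  inv4 (qadd (qmul a w) b) a (qadd (qmul c w) d) c.
Proof.
move=> hw [h1 [h2 [h3 h4]]].
have e1 : dot (qadd (qmul a w) b) (qadd (qmul c w) d) =
  qnorm2 w * dot a c + dot b d + qRe (qmul (qconj w) (qconj (qadd (qmul (qconj b) c) (qmul (qconj d) a)))).
  qd; ring.
have e3 : qadd (qmul (qconj a) (qadd (qmul c w) d)) (qmul (qconj c) (qadd (qmul a w) b)) =
  qadd (qscale (2 * dot a c) w) (qconj (qadd (qmul (qconj b) c) (qmul (qconj d) a))).
  qd; f_equal; ring.
have e4 : dot (qadd (qmul c w) d) c = q0 w * qnorm2 c + dot c d.
  rewrite /qnorm2; qd; ring.
split; [|split; [|split]].
- by rewrite e1 h1 h2 h3 qconj_one qmulr1 mulr0 !add0r /qRe /qconj /= hw.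
- by [].
- by rewrite e3 h1 mulr0 qscale0 qadd0l h3 qconj_one.
- by rewrite e4 hw h4 mul0r addr0.
Qed.

Lemma sym0 (x y : Q) : dot x y = 0 -> qadd (qmul (qconj y) x) (qmul (qconj x) y) = qzero R.
Proof. qd => h; f_equal; lra. Qed.

Lemma re_dot (x y : Q) : qRe (qmul x (qconj y)) = dot x y.
Proof. qd; ring. Qed.

Lemma inv4_init (a b c d : Q) : qmx_invertible a b c d -> BG a b c d -> inv4 a b c d.
Proof.
move=> [a' [b' [c' [d' [E1 [_ [E2 _]]]]]]] [h1 h2 h3].
rewrite !re_dot in h1 h2.
have ea : a' = qconj d.
  have e : qadd (qmul (qconj d) (qadd (qmul a a') (qmul b c'))) (qmul (qconj b) (qadd (qmul c a') (qmul d c'))) =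
    qadd (qmul (qadd (qmul (qconj d) a) (qmul (qconj b) c)) a') (qmul (qadd (qmul (qconj d) b) (qmul (qconj b) d)) c').
    qd; f_equal; ring.
  move: e; rewrite E1 E2 qmulr1 qmulr0 qaddr0 (qaddC (qmul (qconj d) a)) h3 qmul1r (sym0 _ _ h2) qmul0r qaddr0.
  by move=> ->.
have ec : c' = qconj c.
  have e : qadd (qmul (qconj c) (qadd (qmul a a') (qmul b c'))) (qmul (qconj a) (qadd (qmul c a') (qmul d c'))) =
    qadd (qmul (qadd (qmul (qconj c) a) (qmul (qconj a) c)) a') (qmul (qconj (qadd (qmul (qconj b) c) (qmul (qconj d) a))) c').
    qd; f_equal; ring.
  move: e; rewrite E1 E2 qmulr1 qmulr0 qaddr0 h3 qconj_one qmul1r (sym0 _ _ h1) qmul0r qadd0l.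
  by move=> ->.
do 3 (split => //).
have : q0 (qadd (qmul c a') (qmul d c')) = 2 * dot c d by rewrite ea ec; qd; ring.
rewrite E2 /= => /esym /eqP; rewrite mulf_eq0 (negbTE two_neq0) /= => /eqP.
done.
Qed.
End H.
Arguments hw {R}. Arguments inv4 {R}. Arguments hq {R}. Arguments dot {R}. Arguments qopp {R}.
Section M.
Variable R : realFieldType.
Local Notation Q := (quat R).

Ltac qd := repeat match goal with x : quat R |- _ => destruct x end;
  rewrite /qopp /qmul /qadd /qconj /qscale /qinv /qnorm2 /qone /qzero /qRe /dot /=.
Ltac cast := rewrite /= ?(rmorphD, rmorphM, rmorphN, rmorphB, rmorph1, rmorph0) /=.

Lemma qnorm2_scale (r : R) (x : Q) : qnorm2 (qscale r x) = r ^+ 2 * qnorm2 x.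
Proof. qd; ring. Qed.

Lemma base (S : (P1 R -> P1 R) -> Prop)
  (hgen : forall g, PSL2H_generator g -> S g)
  (hcomp : forall g h, S g -> S h -> S (g \o h))
  (a b d : Q) : hw a -> hw b -> hw d -> inv4 a b (qzero R) d -> S (mobius a b (qzero R) d).
Proof.
move=> ha hb hd [_ [h2 [h3 _]]].
rewrite qmulr0 qadd0l in h3.
have hn : qnorm2 d * qnorm2 a = 1 by rewrite -(qnorm2_conj _ d) -qnorm2_mul h3 qnorm2_one.
have [Nd eNd] := hw_norm _ _ hd. have [Na eNa] := hw_norm _ _ ha.
have hd1 : qnorm2 d = 1.
  have p1 := qnorm2_ge0 _ d; have p2 := qnorm2_ge0 _ a.
  rewrite eNd in p1 hn *; rewrite eNa in p2 hn. rewrite ler0z in p1. rewrite ler0z in p2.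
  have : ((Nd * Na)%:~R : R) == (1:int)%:~R by rewrite rmorphM hn.
  rewrite eqr_int => /eqP e.
  have hNa : 1 <= Na.
    case: (lerP 1 Na) => // hlt. have e0 : Na = 0 by lia.
    by move: e; rewrite e0 mulr0.
  have hNd : 1 <= Nd.
    case: (lerP 1 Nd) => // hlt. have e0 : Nd = 0 by lia.
    by move: e; rewrite e0 mul0r.
  have -> : Nd = 1 by nia. done.
have ead : a = d.
  have e : qmul d (qmul (qconj d) a) = qscale (qnorm2 d) a by qd; f_equal; ring.
  by move: e; rewrite h3 qmulr1 hd1 qscale1.
subst a.
have hinv : qinv d = qconj d by rewrite /qinv hd1 invr1 qscale1.
have -> : mobius d b (qzero R) d = transl (qmul b (qconj d)) \o uconj d.
  apply: functional_extensionality => -[q|] /=; last by rewrite qnorm2_zero eqxx.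
  by rewrite qmul0r qadd0l hd1 oner_eq0 hinv qmulDl.
apply: hcomp; apply: hgen.
- right; left; exists (qmul b (qconj d)); split => //.
  apply: hw_pure; first by apply: hw_mul => //; apply: hw_conj.
  by rewrite -/(qRe _) re_dot.
- right; right; exists d; split => //; exact: hw_unit.
Qed.

Lemma main_ind (S : (P1 R -> P1 R) -> Prop)
  (hgen : forall g, PSL2H_generator g -> S g)
  (hcomp : forall g h, S g -> S h -> S (g \o h)) (k : nat) :
  forall (a b c d : Q) (N : int), hw a -> hw b -> hw c -> hw d -> inv4 a b c d ->
  qnorm2 c = N%:~R -> N < k%:Z -> S (mobius a b c d).
Proof.
elim: k => [|k IH] a b c d N ha hb hc hd hi eN hk.
  by have := qnorm2_ge0 _ c; rewrite eN ler0z; lia.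
have N0 : 0 <= N by have := qnorm2_ge0 _ c; rewrite eN ler0z.
have [Nz|Npos] : N = 0 \/ 0 < N by lia.
  subst N; have c0 : c = qzero R by apply: qnorm2_eq0; rewrite eN.
  subst c; exact: base.
have ht : pure_int_quat (qmul (qconj c) d).
  apply: hw_pure; first by apply: hw_mul => //; apply: hw_conj.
  have -> : q0 (qmul (qconj c) d) = dot c d by qd; ring.
  by case: hi => [_ [_ [_ ->]]].
case: ht => [t1 [t2 [t3 et]]].
have [w1 hw1] := t4 N t1 Npos.
have [w2 hw2] := t4 N t2 Npos.
have [w3 hw3] := t4 N t3 Npos.
pose w : Q := Quat 0 w1%:~R w2%:~R w3%:~R.
have key : qscale (qnorm2 c) (qadd (qmul c w) d) =
    qmul c (qadd (qscale (qnorm2 c) w) (qmul (qconj c) d)) by rewrite /w; qd; f_equal; ring.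
have hc' : hw (qadd (qmul c w) d).
  by apply: hw_add => //; apply: hw_mul => //; apply: hw_pint.
have [M eM] := hw_norm _ _ hc'.
have hMN : M < N.
  have n1 := congr1 (@qnorm2 R) key.
  rewrite qnorm2_scale qnorm2_mul et eN eM /w /qnorm2 /qscale /qadd /= in n1.
  move: hw1 hw2 hw3; rewrite -!(ler_int R). cast. move=> r1 r2 r3.
  rewrite -(ltr_int R).
  move: n1 r1 r2 r3 Npos; rewrite -(ltr_int R) /=.
  move: (N%:~R : R) (M%:~R : R) (w1%:~R : R) (w2%:~R : R) (w3%:~R : R) (t1%:~R : R) (t2%:~R : R) (t3%:~R : R).
  move=> n m x1 x2 x3 y1 y2 y3 n1 r1 r2 r3 np.
  rewrite /= in np.
  move: n1; rewrite expr2 -mulrA => /(mulfI (lt0r_neq0 np)) e.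
  rewrite mulr0 add0r in e.
  nra.
rewrite (mobius_step _ a b c d w).
apply: (hcomp); first apply: (hcomp).
- apply: (IH _ _ _ _ M) => //.
  + by apply: hw_add => //; apply: hw_mul => //; apply: hw_pint.
  + by apply: inv4_step.
  + lia.
- by apply: hgen; left.
- apply: hgen; right; left; exists (qopp w); split => //.
  exists (- w1), (- w2), (- w3). rewrite /qopp /qscale /w /=. cast.
  by rewrite mulr0 !mulN1r.
Qed.
End M.

Theorem mainTheorem11 (R : realFieldType) (a b c d : quat R) :
  hurwitz a -> hurwitz b -> hurwitz c -> hurwitz d ->
  qmx_invertible a b c d ->
  BG a b c d ->
  in_PSL2H (mobius a b c d).
Proof.
move=> ha hb hc hd hinv hbg S hid hgen hcomp hinv'.
have hi := inv4_init _ _ _ _ _ hinv hbg.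
have [N eN] := hw_norm _ _ (hurwitz_hw _ _ hc).
have N0 : 0 <= N by have := qnorm2_ge0 _ c; rewrite eN ler0z.
case: N eN N0 => [n|n] eN N0; last by [].
apply: (main_ind _ _ hgen hcomp n.+1 a b c d n) => //; try exact: hurwitz_hw.
by rewrite ltz_nat.
Qed.
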